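(* Let $\mathcal{F}=(W,R)$ be a frame. Then: (1) $\mathcal{F}\models_{\mathsf{PWK}_e^{\Box}}\Box\varphi\to\varphi$ (for all formulas $\varphi$) iff $R$ is reflexive; (2) $\mathcal{F}\models_{\mathsf{PWK}_e^{\Box}}\Box\varphi\to\Box\Box\varphi$ iff $R$ is transitive; (3) $\mathcal{F}\models_{\mathsf{PWK}_e^{\Box}}\Diamond\varphi\to\Box\Diamond\varphi$ iff $R$ is Euclidean.
   Context: Formulas are built from a countably infinite set of propositional variables and the constants $0,1$ using the unary connectives $\neg$, $J_2$, $\Box$ and the binary connective $\vee$; $\varphi\to\psi:=\neg\varphi\vee\psi$ and $\Diamond\varphi:=\neg\Box\neg\varphi$. Let $\mathbf{WK}^e$ be the algebra on $\{0,\tfrac12,1\}$ with $\neg0=1$, $\neg1=0$, $\neg\tfrac12=\tfrac12$; $a\vee b=\tfrac12$ if $a=\tfrac12$ or $b=\tfrac12$, otherwise $a\vee b=\max(a,b)$; $J_2(1)=1$, $J_2(\tfrac12)=J_2(0)=0$. A frame is a pair $(W,R)$ with $W\neq\emptyset$ and $R\subseteq W\times W$. A PWK-Kripke model on $(W,R)$ is $(W,R,v)$ with $v:W\times\mathrm{Fm}\to\{0,\tfrac12,1\}$ such that each $v(w,\cdot)$ commutes with $\neg,\vee,J_2,0,1$ as computed in $\mathbf{WK}^e$, and: $v(w,\Box\varphi)=\tfrac12$ iff $v(w,\varphi)=\tfrac12$; $v(w,\Box\varphi)=1$ iff $v(w,\varphi)\neq\tfrac12$ and $v(s,\varphi)\neq0$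 for all $s$ with $wRs$; $v(w,\Box\varphi)=0$ iff $v(w,\varphi)\neq\tfrac12$ and $v(s,\varphi)=0$ for some $s$ with $wRs$. $\mathcal{F}\models_{\mathsf{PWK}_e^{\Box}}\varphi$ means: for every PWK-Kripke model $(W,R,v)$ on $\mathcal{F}$ and every $w\in W$, $v(w,\varphi)\neq0$. $R$ is Euclidean if $wRs$ and $wRt$ imply $sRt$. *)

(* Defs.v *)
(** Three truth values of WK^e: V0 = 0, Vh = 1/2, V1 = 1. *)
Inductive val : Type := V0 | Vh | V1.

Inductive Fm : Type :=
| Var : nat -> Fm
| Zero : Fm
| One : Fm
| Neg : Fm -> Fm
| J2 : Fm -> Fm
| Box : Fm -> Fm
| Or : Fm -> Fm -> Fm.

Definition Imp (p q : Fm) : Fm := Or (Neg p) q.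
Definition Dia (p : Fm) : Fm := Neg (Box (Neg p)).

Definition wk_neg (a : val) : val :=
  match a with V0 => V1 | Vh => Vh | V1 => V0 end.

Definition wk_or (a b : val) : val :=
  match a, b with
  | Vh, _ => Vh
  | _, Vh => Vh
  | V1, _ => V1
  | _, V1 => V1
  | V0, V0 => V0
  end.

Definition wk_J2 (a : val) : val :=
  match a with V1 => V1 | _ => V0 end.

Definition PWK_model {W : Type} (R : W -> W -> Prop) (v : W -> Fm -> val) : Prop :=
  forall w : W,
    v w Zero = V0 /\ v w One = V1 /\
    (forall p, v w (Neg p) = wk_neg (v w p)) /\
    (forall p, v w (J2 p) = wk_J2 (v w p)) /\
    (forall p q, v w (Or p q) = wk_or (v w p) (v w q)) /\
    (forall p,
       (v w (Box p) = Vh <-> v w p = Vh) /\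
       (v w (Box p) = V1 <-> (v w p <> Vh /\ forall s, R w s -> v s p <> V0)) /\
       (v w (Box p) = V0 <-> (v w p <> Vh /\ exists s, R w s /\ v s p = V0))).

Definition frame_valid {W : Type} (R : W -> W -> Prop) (phi : Fm) : Prop :=
  forall v : W -> Fm -> val, PWK_model R v -> forall w : W, v w phi <> V0.

Definition reflexive {W : Type} (R : W -> W -> Prop) : Prop := forall w, R w w.
Definition transitive {W : Type} (R : W -> W -> Prop) : Prop :=
  forall w s t, R w s -> R s t -> R w t.
Definition euclidean {W : Type} (R : W -> W -> Prop) : Prop :=
  forall w s t, R w s -> R w t -> R s t.

(* Main.v *)
Require Import Defs.
From Stdlib Require Import Classical ClassicalEpsilon.

Section M.
Variable W : Type.
Variable R : W -> W -> Prop.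
Variable f : W -> nat -> val.

Fixpoint ev (p : Fm) (w : W) : val :=
  match p with
  | Var n => f w n
  | Zero => V0
  | One => V1
  | Neg q => wk_neg (ev q w)
  | J2 q => wk_J2 (ev q w)
  | Or a b => wk_or (ev a w) (ev b w)
  | Box q => match ev q w with
             | Vh => Vh
             | _ => if excluded_middle_informative (exists s, R w s /\ ev q s = V0) then V0 else V1
             end
  end.

Lemma ev_model : PWK_model R (fun w p => ev p w).
Proof.
  intro w; split; [reflexivity|]; split; [reflexivity|].
  split; [reflexivity|]; split; [reflexivity|]; split; [reflexivity|].
  intro p; cbn [ev].
  destruct (excluded_middle_informative (exists s, R w s /\ ev p s = V0)) as [Hx|Hx];
  destruct (ev p w) eqn:E; repeat split; intros; try discriminate; try congruence;
  repeat match goal with H : _ /\ _ |- _ => destruct H end; try congruence; auto.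
  all: try (destruct Hx as [s' [Hs' Hs0']]; exfalso; match goal with Hf : forall s, R _ s -> _ |- _ => eapply Hf; eauto end; fail).
  all: try (intro Hs0; apply Hx; eauto).
  all: idtac.
Qed.
End M.

Section G.
Variable W : Type.
Variable R : W -> W -> Prop.
Variable v : W -> Fm -> val.
Hypothesis Hv : PWK_model R v.

Lemma imp0 w a b : v w (Imp a b) = V0 <-> v w a = V1 /\ v w b = V0.
Proof.
  unfold Imp. destruct (Hv w) as (_&_&HN&_&HO&_).
  rewrite HO, HN. destruct (v w a), (v w b); simpl; intuition discriminate.
Qed.

Lemma dia_eq w p : v w (Dia p) = wk_neg (v w (Box (Neg p))).
Proof. unfold Dia. destruct (Hv w) as (_&_&HN&_). apply HN. Qed.

Lemma neg_eq w p : v w (Neg p) = wk_neg (v w p).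
Proof. destruct (Hv w) as (_&_&HN&_). apply HN. Qed.

Lemma box1 w p : v w (Box p) = V1 <-> (v w p <> Vh /\ forall s, R w s -> v s p <> V0).
Proof. destruct (Hv w) as (_&_&_&_&_&HB). apply HB. Qed.

Lemma box0 w p : v w (Box p) = V0 <-> (v w p <> Vh /\ exists s, R w s /\ v s p = V0).
Proof. destruct (Hv w) as (_&_&_&_&_&HB). apply HB. Qed.

Lemma boxh w p : v w (Box p) = Vh <-> v w p = Vh.
Proof. destruct (Hv w) as (_&_&_&_&_&HB). apply HB. Qed.
End G.

Definition ind {W : Type} (P : W -> Prop) (a b : val) : W -> nat -> val :=
  fun s _ => if excluded_middle_informative (P s) then a else b.

Theorem mainTheorem15 (W : Type) (HW : inhabited W) (R : W -> W -> Prop) :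
  ((forall phi : Fm, frame_valid R (Imp (Box phi) phi)) <-> reflexive R) /\
  ((forall phi : Fm, frame_valid R (Imp (Box phi) (Box (Box phi)))) <-> transitive R) /\
  ((forall phi : Fm, frame_valid R (Imp (Dia phi) (Box (Dia phi)))) <-> euclidean R).
Proof.
  split; [|split]; split.
  - intros Hval w. apply NNPP; intro Hn.
    set (v := fun s p => ev W R (ind (fun s => s = w) V0 V1) p s).
    assert (Hm : PWK_model R v) by apply ev_model.
    assert (Va : forall s, v s (Var 0) = if excluded_middle_informative (s = w) then V0 else V1) by reflexivity.
    apply (Hval (Var 0) v Hm w). apply (imp0 _ _ _ Hm). split.
    + apply (box1 _ _ _ Hm). rewrite Va. destruct excluded_middle_informative; [|congruence].
      split; [discriminate|]. intros s Hs. rewrite Va.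
      destruct excluded_middle_informative; [subst; contradiction|discriminate].
    + rewrite Va. destruct excluded_middle_informative; congruence.
  - intros Hr phi v Hm w H. apply (imp0 _ _ _ Hm) in H. destruct H as [H1 H2].
    apply (box1 _ _ _ Hm) in H1. destruct H1 as [_ H1]. exact (H1 w (Hr w) H2).
  - intros Hval w s t Hws Hst. apply NNPP; intro Hn.
    set (v := fun x p => ev W R (ind (fun x => x = t) V0 V1) p x).
    assert (Hm : PWK_model R v) by apply ev_model.
    assert (Va : forall x, v x (Var 0) = if excluded_middle_informative (x = t) then V0 else V1) by reflexivity.
    assert (Vnh : forall x, v x (Var 0) <> Vh).
    { intro x. rewrite Va. destruct excluded_middle_informative; discriminate. }
    apply (Hval (Var 0) v Hm w). apply (imp0 _ _ _ Hm). split.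
    + apply (box1 _ _ _ Hm). split; [apply Vnh|]. intros x Hx. rewrite Va.
      destruct excluded_middle_informative; [subst; contradiction|discriminate].
    + apply (box0 _ _ _ Hm). split.
      * intro H. apply (proj1 (boxh _ _ _ Hm _ _)) in H. exact (Vnh _ H).
      * exists s. split; [exact Hws|]. apply (box0 _ _ _ Hm). split; [apply Vnh|].
        exists t. split; [exact Hst|]. rewrite Va. destruct excluded_middle_informative; congruence.
  - intros Ht phi v Hm w H. apply (imp0 _ _ _ Hm) in H. destruct H as [H1 H2].
    apply (box1 _ _ _ Hm) in H1. destruct H1 as [_ H1].
    apply (box0 _ _ _ Hm) in H2. destruct H2 as [_ [s [Hs H2]]].
    apply (box0 _ _ _ Hm) in H2. destruct H2 as [_ [t [Hst H2]]].
    exact (H1 t (Ht _ _ _ Hs Hst) H2).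
  - intros Hval w s t Hws Hwt. apply NNPP; intro Hn.
    set (v := fun x p => ev W R (ind (fun x => x = t) V1 V0) p x).
    assert (Hm : PWK_model R v) by apply ev_model.
    assert (Va : forall x, v x (Var 0) = if excluded_middle_informative (x = t) then V1 else V0) by reflexivity.
    assert (Vnh : forall x, v x (Var 0) <> Vh).
    { intro x. rewrite Va. destruct excluded_middle_informative; discriminate. }
    assert (Vnnh : forall x, v x (Neg (Var 0)) <> Vh).
    { intro x. rewrite (neg_eq _ _ _ Hm). rewrite Va. destruct excluded_middle_informative; discriminate. }
    apply (Hval (Var 0) v Hm w). apply (imp0 _ _ _ Hm). split.
    + rewrite (dia_eq _ _ _ Hm). assert (v w (Box (Neg (Var 0))) = V0) as ->; [|reflexivity].
      apply (box0 _ _ _ Hm). split; [apply Vnnh|]. exists t. split; [exact Hwt|].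
      rewrite (neg_eq _ _ _ Hm), Va. destruct excluded_middle_informative; [reflexivity|congruence].
    + apply (box0 _ _ _ Hm). split.
      * intro H. rewrite (dia_eq _ _ _ Hm) in H. destruct (v w (Box (Neg (Var 0)))) eqn:E; simpl in H; try discriminate.
        apply (proj1 (boxh _ _ _ Hm _ _)) in E. exact (Vnnh _ E).
      * exists s. split; [exact Hws|]. rewrite (dia_eq _ _ _ Hm).
        assert (v s (Box (Neg (Var 0))) = V1) as ->; [|reflexivity].
        apply (box1 _ _ _ Hm). split; [apply Vnnh|]. intros x Hx.
        rewrite (neg_eq _ _ _ Hm), Va. destruct excluded_middle_informative; [subst; contradiction|discriminate].
  - intros He phi v Hm w H. apply (imp0 _ _ _ Hm) in H. destruct H as [H1 H2].
    rewrite (dia_eq _ _ _ Hm) in H1.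
    assert (H1' : v w (Box (Neg phi)) = V0) by (destruct (v w (Box (Neg phi))); simpl in H1; congruence).
    apply (box0 _ _ _ Hm) in H1'. destruct H1' as [_ [s [Hs Hs1]]].
    apply (box0 _ _ _ Hm) in H2. destruct H2 as [_ [t [Ht Ht0]]].
    rewrite (dia_eq _ _ _ Hm) in Ht0.
    assert (Ht1 : v t (Box (Neg phi)) = V1) by (destruct (v t (Box (Neg phi))); simpl in Ht0; congruence).
    apply (box1 _ _ _ Hm) in Ht1. destruct Ht1 as [_ Ht1].
    exact (Ht1 s (He _ _ _ Ht Hs) Hs1).
Qed.
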